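(* Consider the power-market model described in the context, fix a day $k$, a parameter $\eta>0$ and the queue state $\mathbf{Q}(t_k)$. For a price vector $\mathbf{p}(k)=(p(k,t))_{t=0}^{T-1}\in\mathcal{P}$ define $$\Phi(\mathbf{p}(k))=\sum_{t=0}^{T-1}\mathbb{E}\Big[\eta\sum_{n=1}^N U_n(L_n(k,t),t)-\eta\,\text{Cost}(k,t)+\sum_n Q_n(t_k+t)\,L^{\mathsf{d}}_n(p(k,t),t)\,\Big|\,\mathbf{Q}(t_k)\Big],$$ $$\Phi^{\mathsf{A}}(\mathbf{p}(k))=\sum_{t=0}^{T-1}\mathbb{E}\Big[\eta\sum_{n=1}^N U_n(L_n(k,t),t)-\eta\,\text{Cost}(k,t)+\sum_n Q_n(t_k)\,L^{\mathsf{d}}_n(p(k,t),t)\,\Big|\,\mathbf{Q}(t_k)\Big],$$ where the loads are those induced by the prices. Let $\Phi^*$ be the maximum of $\Phi$ over $\mathcal{P}$ and let $\mathbf{p}^{\mathsf{A}}(k)$ be a maximizer of $\Phi^{\mathsf{A}}$ over $\mathcal{P}$. Then $$\Phi^{\mathsf{A}}(\mathbf{p}^{\mathsf{A}}(k))\ge \Phi^*-TC_0,\qquad C_0=\frac{T-1}{2}\sum_n\big([L_n^{\max}]^2+[L_n^{\mathsf{av}}]^2\big).$$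
   Context: Days $k=0,1,\dots$ are divided into $T$ slots, $t_k=kT$. The utility company chooses user prices $\mathbf{p}(k)=(p(k,t))_t$ from a compact set $\mathcal{P}\subseteq[0,p_{\max}]^T$. Each of $N$ users has an increasing continuous utility $U_n(L,t)$; given price $p(k,t)$, user $n$ chooses the intended load $L^{\mathsf{d}}_n(p(k,t),t)$ as the smallest maximizer over $L\in[L_n^{\min}(t),L_n^{\mathsf{d},\max}]$ of $\mathbb{E}[U_n(L+w_n(k,t),t)-p(k,t)(L+w_n(k,t))]$, and actually consumes $L_n(k,t)=L^{\mathsf{d}}_n(k,t)+w_n(k,t)$ with $w_n$ zero-mean random deviations, where $0\le L_n(k,t)\le L_n^{\max}$. $\text{Cost}(k,t)=\beta(k,t)B(k,t)+\alpha(k,t)[L(k,t)-B(k,t)-X(k,t)]^+$ is the power procurement cost ($X$ renewable power, $B$ base-power bought at day-ahead price $\beta$, deficit bought at real-time price $\alpha$, $L=\sum_n L_n$). Deficit queues: $Q_n(0)=0$, $Q_n(t_k+t+1)=[Q_n(t_k+t)-L_n(k,t)]^++L_n^{\mathsf{av}}$, with constants $L_n^{\mathsf{av}}\ge0$; $\mathbf{Q}=(Q_n)_n$. *)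

(* Defs.v *)
From HB Require Import structures.
From mathcomp Require Import all_boot all_order all_algebra.
From mathcomp Require Import all_classical all_reals all_analysis.
Set Implicit Arguments. Unset Strict Implicit. Unset Printing Implicit Defensive.
Import Order.TTheory GRing.Theory Num.Theory.
Import numFieldNormedType.Exports.
Local Open Scope classical_set_scope.
Local Open Scope ring_scope.

Definition pospart {R : realType} (x : R) : R := Num.max x 0.

Definition slot_ext {R : realType} {T : nat} (f : 'I_T -> R) (s : nat) : R :=
  if (insub s : option 'I_T) is Some i then f i else 0.

(* deficit queue within the day: Q(t_k) = q, Q(t_k+s+1) = [Q(t_k+s) - l s]^+ + Lav *)
Fixpoint queue {R : realType} (q Lav : R) (l : nat -> R) (t : nat) : R :=
  match t with
  | 0 => q
  | t'.+1 => pospart (queue q Lav l t' - l t') + Lav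
  end.

Definition smallest_maximizer {R : realType} (f : R -> \bar R) (a b x : R) : Prop :=
  [/\ a <= x <= b,
      (forall y, a <= y <= b -> (f y <= f x)%E) &
      (forall y, a <= y <= b -> f y = f x -> x <= y)].

Section Model.
Context {R : realType} {d : measure_display} {Om : measurableType d}.
Context (P : probability Om R) (N T : nat).
(* U n L t : utility of user n for load L at slot t *)
Context (U : 'I_N -> R -> 'I_T -> R).
(* Ld n price t : intended load of user n at slot t for the given price *)
Context (Ld : 'I_N -> R -> 'I_T -> R).
(* w n t : random deviation of user n at slot t (of day k) *)
Context (w : 'I_N -> 'I_T -> Om -> R).
(* renewable X, base power B, day-ahead price beta, real-time price alpha *)
Context (X B beta alpha : 'I_T -> Om -> R).

Definition user_obj (n : 'I_N) (t : 'I_T) (price L : R) : \bar R :=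
  (\int[P]_om (U n (L + w n t om) t - price * (L + w n t om))%:E)%E.

(* actual load L_n(k,t) induced by price vector p *)
Definition load (p : 'rV[R]_T) (n : 'I_N) (t : 'I_T) (om : Om) : R :=
  Ld n (p ord0 t) t + w n t om.

Definition total_load (p : 'rV[R]_T) (t : 'I_T) (om : Om) : R :=
  \sum_(n < N) load p n t om.

Definition cost (p : 'rV[R]_T) (t : 'I_T) (om : Om) : R :=
  beta t om * B t om + alpha t om * pospart (total_load p t om - B t om - X t om).

(* Q_n(t_k + t) under price vector p, given Q(t_k) = q0 *)
Definition queue_at (q0 Lav : 'I_N -> R) (p : 'rV[R]_T) (n : 'I_N) (t : nat)
  (om : Om) : R :=
  queue (q0 n) (Lav n) (slot_ext (fun s => load p n s om)) t.

Definition Phi (eta : R) (q0 Lav : 'I_N -> R) (p : 'rV[R]_T) : \bar R :=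
  (\sum_(t < T) \int[P]_om
     (eta * (\sum_(n < N) U n (load p n t om) t) - eta * cost p t om
      + \sum_(n < N) queue_at q0 Lav p n t om * Ld n (p ord0 t) t)%:E)%E.

Definition PhiA (eta : R) (q0 : 'I_N -> R) (p : 'rV[R]_T) : \bar R :=
  (\sum_(t < T) \int[P]_om
     (eta * (\sum_(n < N) U n (load p n t om) t) - eta * cost p t om
      + \sum_(n < N) q0 n * Ld n (p ord0 t) t)%:E)%E.

End Model.

(* Main.v *)
Require Import Defs.
From HB Require Import structures.
From mathcomp Require Import all_boot all_order all_algebra.
From mathcomp Require Import all_classical all_reals all_analysis.
Import Order.TTheory GRing.Theory Num.Theory.
Import numFieldNormedType.Exports.
Local Open Scope classical_set_scope.
Local Open Scope ring_scope.

Local Open Scope ereal_scope.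
Lemma mean_bounds (R : realType) (d : measure_display) (Om : measurableType d)
  (P : probability Om R) (w : Om -> R) (c M : R) :
  P.-integrable setT (fun om => (w om)%:E) ->
  (\int[P]_om (w om)%:E = 0)%E ->
  (forall om, (0 <= c + w om <= M)%R) -> (0 <= c <= M)%R.
Proof.
move=> iw w0 hb.
have ic : P.-integrable setT (fun _ : Om => c%:E).
  exact: (finite_measure_integrable_cst P c measurableT).
have iM : P.-integrable setT (fun _ : Om => M%:E).
  exact: (finite_measure_integrable_cst P M measurableT).
have icw : P.-integrable setT (fun om => (c + w om)%:E).
  by apply: (eq_integrable measurableT _ _ _ (integrableD measurableT ic iw)) => x _.
have E : \int[P]_om (c + w om)%:E = c%:E.
  under eq_integral do rewrite EFinD.
  rewrite (integralD measurableT) //= w0 adde0.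
  by rewrite (integral_cst P measurableT c%:E) /=; rewrite probability_setT mule1.
apply/andP; split; rewrite -lee_fin -E.
  by apply: integral_ge0 => x _; rewrite lee_fin; case/andP: (hb x).
apply: (le_trans (le_integral measurableT icw iM _)).
  by move=> x _; rewrite lee_fin; case/andP: (hb x).
by rewrite (integral_cst P measurableT M%:E) /= probability_setT mule1.
Qed.
Local Close Scope ereal_scope.
Lemma queue_ge0 (R : realType) (q Lav : R) l t :
  0 <= q -> 0 <= Lav -> 0 <= queue q Lav l t.
Proof.
move=> q0 L0; case: t => [|t] //=.
by rewrite addr_ge0 // /pospart le_max lexx orbT.
Qed.

Lemma queue_le (R : realType) (q Lav : R) l t :
  0 <= q -> 0 <= Lav -> (forall s, 0 <= l s) -> queue q Lav l t <= q + t%:R * Lav.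
Proof.
move=> q0 L0 l0; elim: t => [|t IH] /=; first by rewrite mul0r addr0.
have Q0 := @queue_ge0 R q Lav l t q0 L0.
have h : pospart (queue q Lav l t - l t) <= queue q Lav l t.
  by rewrite /pospart ge_max Q0 andbT lerBlDr lerDl.
rewrite -natr1 mulrDl mul1r addrA lerD2r.
exact: le_trans h IH.
Qed.

Lemma queue_meas (R : realType) (d : measure_display) (Om : measurableType d)
  (q Lav : R) (l : nat -> Om -> R) t :
  (forall s, measurable_fun setT (l s)) ->
  measurable_fun setT (fun om => queue q Lav (fun s => l s om) t).
Proof.
move=> ml; elim: t => [|t IH] /=; first exact: measurable_cst.
apply: measurable_realfun.measurable_funD; last exact: measurable_cst.
rewrite /pospart.
apply: (measurable_realfun.measurable_maxr (f := fun om => queue q Lav (fun s => l s om) t - l t om) (g := cst 0)).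
  exact: measurable_realfun.measurable_funB.
exact: measurable_cst.
Qed.
From mathcomp Require Import lra.

Theorem lemma4 (R : realType) (d : measure_display) (Om : measurableType d)
  (P : probability Om R) (N T : nat)
  (U : 'I_N -> R -> 'I_T -> R) (Ld : 'I_N -> R -> 'I_T -> R)
  (w : 'I_N -> 'I_T -> Om -> R) (X B beta alpha : 'I_T -> Om -> R)
  (pmax : R) (Pset : set 'rV[R]_T)
  (Lmin : 'I_N -> 'I_T -> R) (Ldmax Lmax Lav q0 : 'I_N -> R) (eta : R)
  (pA pstar : 'rV[R]_T) :
  compact Pset ->
  (forall p, Pset p -> forall t, 0 <= p ord0 t <= pmax) ->
  (forall n t, continuous (fun L => U n L t)) ->
  (forall n t, {homo (fun L => U n L t) : x y / x <= y}) ->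
  (forall n t, measurable_fun setT (w n t)) ->
  (forall n t, P.-integrable setT (fun om => (w n t om)%:E)) ->
  (forall n t, (\int[P]_om (w n t om)%:E = 0)%E) ->
  (forall t, measurable_fun setT (X t)) ->
  (forall t, measurable_fun setT (B t)) ->
  (forall t, measurable_fun setT (beta t)) ->
  (forall t, measurable_fun setT (alpha t)) ->
  (forall p, Pset p -> forall n t,
     smallest_maximizer (user_obj P U w n t (p ord0 t)) (Lmin n t) (Ldmax n) (Ld n (p ord0 t) t)) ->
  (forall p, Pset p -> forall n t om, 0 <= load Ld w p n t om <= Lmax n) ->
  (forall p, Pset p -> forall n t,
     P.-integrable setT (fun om => (U n (load Ld w p n t om) t)%:E)) ->
  (forall p, Pset p -> forall t,
     P.-integrable setT (fun om => (cost Ld w X B beta alpha p t om)%:E)) ->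
  (forall n, 0 <= Lav n) ->
  (forall n, 0 <= q0 n) ->
  0 < eta ->
  Pset pstar ->
  (forall p, Pset p -> (Phi P U Ld w X B beta alpha eta q0 Lav p
                        <= Phi P U Ld w X B beta alpha eta q0 Lav pstar)%E) ->
  Pset pA ->
  (forall p, Pset p -> (PhiA P U Ld w X B beta alpha eta q0 p
                        <= PhiA P U Ld w X B beta alpha eta q0 pA)%E) ->
  (PhiA P U Ld w X B beta alpha eta q0 pA >=
     Phi P U Ld w X B beta alpha eta q0 Lav pstar
     - (T%:R * ((T%:R - 1) / 2 * \sum_(n < N) (Lmax n ^+ 2 + Lav n ^+ 2)))%:E)%E.
Proof.
move=> _ _ _ _ mw iw w0 _ _ _ _ _ lb iU icost Lav0 q00 eta0 Ps _ _ maxA.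
set c := (T%:R - 1) / 2 * \sum_(n < N) (Lmax n ^+ 2 + Lav n ^+ 2).
set p := pstar.
have Ldb : forall n t, 0 <= Ld n (p ord0 t) t <= Lmax n.
  move=> n t; apply: (@mean_bounds R d Om P (w n t) (Ld n (p ord0 t) t) (Lmax n) (iw n t) (w0 n t)) => om.
  exact: (lb p Ps n t om).
have lext0 : forall n om s, 0 <= slot_ext (fun i => load Ld w p n i om) s.
  move=> n om s; rewrite /slot_ext; case: insub => [i|] //.
  by case/andP: (lb p Ps n i om).
have mload : forall n (t : 'I_T), measurable_fun setT (fun om => load Ld w p n t om).
  move=> n t; apply: measurable_realfun.measurable_funD; last exact: mw.
  exact: measurable_cst.
have mQ : forall n (t : nat), measurable_fun setT (fun om => queue_at Ld w q0 Lav p n t om).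
  move=> n t; apply: (@queue_meas R d Om (q0 n) (Lav n) (fun s om => slot_ext (fun i => load Ld w p n i om) s)).
  move=> s; rewrite /slot_ext; case: insub => [i|]; last exact: measurable_cst.
  exact: mload.
have hb : forall (t : 'I_T) om,
    \sum_(n < N) (queue_at Ld w q0 Lav p n t om - q0 n) * Ld n (p ord0 t) t <= c.
  move=> t om; rewrite /c mulr_sumr; apply: ler_sum => n _.
  have Q0 := @queue_ge0 R (q0 n) (Lav n) (slot_ext (fun i => load Ld w p n i om)) t (q00 n) (Lav0 n).
  have Ql := @queue_le R (q0 n) (Lav n) (slot_ext (fun i => load Ld w p n i om)) t (q00 n) (Lav0 n) (lext0 n om).
  rewrite /queue_at.
  move: Q0 Ql; set Q := queue _ _ _ _ => Q0 Ql.
  have tT : (t%:R : R) <= T%:R - 1.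
    by rewrite lerBrDr natr1 ler_nat ltn_ord.
  case/andP: (Ldb n t) => x0 xL; move: x0 xL; set x := Ld n _ _ => x0 xL.
  have La := Lav0 n.
  have t0 : (0 : R) <= t%:R by exact: ler0n.
  have h1 : 0 <= ((T%:R - 1) * Lav n - (Q - q0 n)) * x.
    have h0 : t%:R * Lav n <= (T%:R - 1) * Lav n by apply: ler_wpM2r.
    apply: mulr_ge0 => //. rewrite subr_ge0 lerBlDl; apply: (le_trans Ql); rewrite lerD2l; exact: h0.
  have h2 : 0 <= (T%:R - 1) * Lav n * (Lmax n - x).
    by apply: mulr_ge0; [apply: mulr_ge0|]; lra.
  have h3 : 0 <= (T%:R - 1) * (Lmax n - Lav n) ^+ 2.
    by apply: mulr_ge0; [lra| exact: sqr_ge0].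
  nra.
have ih : forall t : 'I_T, P.-integrable setT (fun om =>
    (\sum_(n < N) (queue_at Ld w q0 Lav p n t om - q0 n) * Ld n (p ord0 t) t)%:E).
  move=> t.
  apply: (le_integrable measurableT (g := fun _ => (\sum_(n < N) (2 * q0 n + T%:R * Lav n) * Lmax n)%:E)).
  - apply/measurable_realfun.measurable_EFinP; apply: measurable_sum => n.
    apply: measurable_realfun.measurable_funM; last exact: measurable_cst.
    apply: measurable_realfun.measurable_funB; [exact: mQ| exact: measurable_cst].
  - move=> om _; rewrite !abse_EFin lee_fin.
    apply: (le_trans (ler_norm_sum _ _ _)).
    rewrite [X in _ <= X]ger0_norm; last first.
      apply: sumr_ge0 => n _; apply: mulr_ge0; last by case/andP: (Ldb n t) => ? ?; lra.
      by apply: addr_ge0; [apply: mulr_ge0 => //; exact: q00 | apply: mulr_ge0 => //; exact: Lav0].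
    apply: ler_sum => n _.
    have Q0 := @queue_ge0 R (q0 n) (Lav n) (slot_ext (fun i => load Ld w p n i om)) t (q00 n) (Lav0 n).
    have Ql := @queue_le R (q0 n) (Lav n) (slot_ext (fun i => load Ld w p n i om)) t (q00 n) (Lav0 n) (lext0 n om).
    rewrite /queue_at.
    move: Q0 Ql; set Q := queue _ _ _ _ => Q0 Ql.
    have tT : (t%:R : R) <= T%:R.
      by rewrite ler_nat ltnW.
    case/andP: (Ldb n t) => x0 xL; move: x0 xL; set x := Ld n _ _ => x0 xL.
    have La := Lav0 n; have qa := q00 n.
    rewrite normrM (ger0_norm x0).
    apply: ler_pM => //.
    have h4 : t%:R * Lav n <= T%:R * Lav n by apply: ler_wpM2r.
    rewrite ler_norml; apply/andP; split; lra.
  - exact: (finite_measure_integrable_cst P _ measurableT).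
have ig : forall t : 'I_T, P.-integrable setT (fun om =>
    (eta * (\sum_(n < N) U n (load Ld w p n t om) t) - eta * cost Ld w X B beta alpha p t om
      + \sum_(n < N) q0 n * Ld n (p ord0 t) t)%:E).
  move=> t.
  have i1 := integrable_sum measurableT (index_enum 'I_N) (P := xpredT) (fun n _ => iU p Ps n t).
  have i2 := integrableZl measurableT eta i1.
  have i3 := integrableZl measurableT eta (icost p Ps t).
  have i4 := integrableB measurableT i2 i3.
  have i5 := integrableD measurableT i4
    (finite_measure_integrable_cst P (\sum_(n < N) q0 n * Ld n (p ord0 t) t) measurableT).
  apply: (eq_integrable measurableT _ _ _ i5) => om _ /=.
  by rewrite EFinD EFinB !EFinM sumEFin.
have step : forall t : 'I_T,
  (\int[P]_om (eta * (\sum_(n < N) U n (load Ld w p n t om) t) - eta * cost Ld w X B beta alpha p t om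
      + \sum_(n < N) queue_at Ld w q0 Lav p n t om * Ld n (p ord0 t) t)%:E
   <= \int[P]_om (eta * (\sum_(n < N) U n (load Ld w p n t om) t) - eta * cost Ld w X B beta alpha p t om
      + \sum_(n < N) q0 n * Ld n (p ord0 t) t)%:E + c%:E)%E.
  move=> t.
  rewrite (eq_integral (fun om => (eta * (\sum_(n < N) U n (load Ld w p n t om) t) - eta * cost Ld w X B beta alpha p t om
      + \sum_(n < N) q0 n * Ld n (p ord0 t) t)%:E +
      (\sum_(n < N) (queue_at Ld w q0 Lav p n t om - q0 n) * Ld n (p ord0 t) t)%:E)%E); last first.
    move=> om _; rewrite -EFinD; congr (_%:E).
    have -> : \sum_(n < N) queue_at Ld w q0 Lav p n t om * Ld n (p ord0 t) t =
      \sum_(n < N) q0 n * Ld n (p ord0 t) t +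
      \sum_(n < N) (queue_at Ld w q0 Lav p n t om - q0 n) * Ld n (p ord0 t) t.
      by rewrite -big_split /=; apply: eq_bigr => n _; rewrite mulrBl addrC subrK.
    by rewrite addrA.
  rewrite (integralD measurableT (ig t) (ih t)); apply: leeD2l.
  apply: (le_trans (le_integral measurableT (ih t)
     (finite_measure_integrable_cst P c measurableT) _)).
    by move=> om _; rewrite lee_fin; exact: hb.
  by rewrite (integral_cst P measurableT c%:E) /= probability_setT mule1.
have key : (Phi P U Ld w X B beta alpha eta q0 Lav p
           <= PhiA P U Ld w X B beta alpha eta q0 p + (T%:R * c)%:E)%E.
  rewrite /Phi /PhiA.
  apply: (le_trans (lee_sum _ (fun t _ => step t))).
  rewrite big_split /= sumEFin sumr_const card_ord mulr_natl.
  by [].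
rewrite leeBlDr //.
apply: (le_trans key); apply: leeD2r.
exact: maxA.
Qed.
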